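(* Let $X$ be a complex Banach space with open unit ball $B$, and let $Y$ be a closed subspace of $X$ of finite codimension with open unit ball $B_Y$. Then for every $f\in A_u(B)$, $Cl_B(f,0)=Cl_{B_Y}(f|_{B_Y},0)$.
   Context: $A_u(B)$ is the algebra of bounded holomorphic functions on $B$ that are uniformly continuous on $B$. For a Banach space $Z$ with open unit ball $B_Z$ and a function $g$ on $B_Z$, $Cl_{B_Z}(g,0)$ is the set of all $\lambda\in\mathbb C$ such that $\lambda=\lim_\alpha g(z_\alpha)$ for some net $(z_\alpha)$ in $B_Z$ converging weakly to $0$ (equivalently weak-star to $0$ in $Z^{**}$). *)

(* Defs.v *)
From Stdlib Require Import Reals Lra.
Open Scope R_scope.

Record Cplx : Type := mkC { Re : R; Im : R }.
Definition C0 : Cplx := mkC 0 0.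
Definition C1 : Cplx := mkC 1 0.
Definition Cadd (a b : Cplx) : Cplx := mkC (Re a + Re b) (Im a + Im b).
Definition Copp (a : Cplx) : Cplx := mkC (- Re a) (- Im a).
Definition Csub (a b : Cplx) : Cplx := Cadd a (Copp b).
Definition Cmul (a b : Cplx) : Cplx :=
  mkC (Re a * Re b - Im a * Im b) (Re a * Im b + Im a * Re b).
Definition Cmod (a : Cplx) : R := sqrt (Re a * Re a + Im a * Im a).

Record CBanach : Type := {
  vec :> Type;
  vzero : vec;
  vadd : vec -> vec -> vec;
  vopp : vec -> vec;
  vscal : Cplx -> vec -> vec;
  vnorm : vec -> R;
  vadd_assoc : forall x y z, vadd x (vadd y z) = vadd (vadd x y) z;
  vadd_comm : forall x y, vadd x y = vadd y x;
  vadd_0 : forall x, vadd x vzero = x;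
  vadd_opp : forall x, vadd x (vopp x) = vzero;
  vscal_1 : forall x, vscal C1 x = x;
  vscal_assoc : forall a b x, vscal a (vscal b x) = vscal (Cmul a b) x;
  vscal_distr_v : forall a x y, vscal a (vadd x y) = vadd (vscal a x) (vscal a y);
  vscal_distr_c : forall a b x, vscal (Cadd a b) x = vadd (vscal a x) (vscal b x);
  vnorm_scal : forall a x, vnorm (vscal a x) = Cmod a * vnorm x;
  vnorm_triangle : forall x y, vnorm (vadd x y) <= vnorm x + vnorm y;
  vnorm_eq0 : forall x, vnorm x = 0 -> x = vzero;
  vcomplete : forall u : nat -> vec,
    (forall eps, eps > 0 -> exists N, forall n m, (n >= N)%nat -> (m >= N)%nat ->
        vnorm (vadd (u n) (vopp (u m))) < eps) ->
    exists l, forall eps, eps > 0 -> exists N, forall n, (n >= N)%nat ->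
        vnorm (vadd (u n) (vopp l)) < eps
}.

Arguments vzero {_}.
Arguments vadd {_}.
Arguments vopp {_}.
Arguments vscal {_}.
Arguments vnorm {_}.

Definition vsub {X : CBanach} (x y : X) : X := vadd x (vopp y).

Definition ball1 {X : CBanach} (x : X) : Prop := vnorm x < 1.

Definition is_subspace {X : CBanach} (Y : X -> Prop) : Prop :=
  Y vzero /\ (forall x y, Y x -> Y y -> Y (vadd x y)) /\
  (forall a x, Y x -> Y (vscal a x)).

Definition is_closed {X : CBanach} (Y : X -> Prop) : Prop :=
  forall (u : nat -> X) (l : X), (forall n, Y (u n)) ->
    (forall eps, eps > 0 -> exists N, forall n, (n >= N)%nat -> vnorm (vsub (u n) l) < eps) ->
    Y l.

(* finite codimension: the quotient X/Y is finite dimensional, i.e. spanned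
   by the classes of finitely many vectors e_0, ..., e_{n-1}. *)
Fixpoint lincomb {X : CBanach} (n : nat) (c : nat -> Cplx) (e : nat -> X) : X :=
  match n with
  | O => vzero
  | S k => vadd (lincomb k c e) (vscal (c k) (e k))
  end.

Definition finite_codim {X : CBanach} (Y : X -> Prop) : Prop :=
  exists (n : nat) (e : nat -> X), forall x : X,
    exists (c : nat -> Cplx) (y : X), Y y /\ x = vadd y (lincomb n c e).

Definition is_Clinear {X : CBanach} (L : X -> Cplx) : Prop :=
  (forall x y, L (vadd x y) = Cadd (L x) (L y)) /\
  (forall a x, L (vscal a x) = Cmul a (L x)).

Definition holomorphic_on_ball {X : CBanach} (f : X -> Cplx) : Prop :=
  forall x : X, ball1 x ->
    exists L : X -> Cplx, is_Clinear L /\ (exists M, forall h, Cmod (L h) <= M * vnorm h) /\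
      forall eps, eps > 0 -> exists delta, delta > 0 /\
        forall h : X, vnorm h < delta ->
          Cmod (Csub (Csub (f (vadd x h)) (f x)) (L h)) <= eps * vnorm h.

Definition bounded_on_ball {X : CBanach} (f : X -> Cplx) : Prop :=
  exists M, forall x : X, ball1 x -> Cmod (f x) <= M.

Definition unif_cont_on_ball {X : CBanach} (f : X -> Cplx) : Prop :=
  forall eps, eps > 0 -> exists delta, delta > 0 /\
    forall x y : X, ball1 x -> ball1 y -> vnorm (vsub x y) < delta ->
      Cmod (Csub (f x) (f y)) < eps.

Definition A_u {X : CBanach} (f : X -> Cplx) : Prop :=
  holomorphic_on_ball f /\ bounded_on_ball f /\ unif_cont_on_ball f.

Definition directed {I : Type} (le : I -> I -> Prop) : Prop :=
  (exists i : I, True) /\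
  (forall i, le i i) /\ (forall i j k, le i j -> le j k -> le i k) /\
  (forall i j, exists k, le i k /\ le j k).

(* continuous (= bounded) Cplx-linear functionals on the normed subspace Z of X
   (Z = the whole space gives the dual X* ) *)
Definition dual_functional {X : CBanach} (Z : X -> Prop) (phi : X -> Cplx) : Prop :=
  (forall x y, Z x -> Z y -> phi (vadd x y) = Cadd (phi x) (phi y)) /\
  (forall a x, Z x -> phi (vscal a x) = Cmul a (phi x)) /\
  (exists M, forall x, Z x -> Cmod (phi x) <= M * vnorm x).

Definition net_lim_C {I : Type} (le : I -> I -> Prop) (w : I -> Cplx) (l : Cplx) : Prop :=
  forall eps, eps > 0 -> exists i0, forall i, le i0 i -> Cmod (Csub (w i) l) < eps.

(* weak convergence to 0 in the normed space Z (a subspace of X, with the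
   induced norm): tested against the functionals of Z* *)
Definition weak_to_0 {X : CBanach} (Z : X -> Prop) {I : Type}
    (le : I -> I -> Prop) (z : I -> X) : Prop :=
  forall phi, dual_functional Z phi -> net_lim_C le (fun i => phi (z i)) C0.

Definition cluster_set0 {X : CBanach} (Z : X -> Prop) (g : X -> Cplx) : Cplx -> Prop :=
  fun lam => exists (I : Type) (le : I -> I -> Prop) (z : I -> X),
    directed le /\ (forall i, Z (z i) /\ ball1 (z i)) /\
    weak_to_0 Z le z /\ net_lim_C le (fun i => g (z i)) lam.

(* Main.v *)
Require Import Defs.
From Stdlib Require Import Reals Lra Psatz ClassicalEpsilon Classical.
Open Scope R_scope.

Lemma Ceq (a b : Cplx) : Re a = Re b -> Im a = Im b -> a = b.
Proof. destruct a, b; simpl; intros; subst; reflexivity. Qed.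

Lemma Cmod_ge0 a : 0 <= Cmod a.
Proof. unfold Cmod; apply sqrt_pos. Qed.

Lemma sqrt_sq_le x y : 0 <= y -> x * x <= y -> x <= sqrt y.
Proof.
  intros Hy H. destruct (Rle_or_lt x 0). { pose proof (sqrt_pos y); lra. }
  rewrite <- (sqrt_square x) by lra. apply sqrt_le_1_alt; lra.
Qed.

Lemma Cmod_triangle a b : Cmod (Cadd a b) <= Cmod a + Cmod b.
Proof.
  unfold Cmod, Cadd; simpl. destruct a as [p q], b as [r s]; simpl.
  set (A := p*p+q*q). set (B := r*r+s*s).
  assert (HA : 0 <= A) by (unfold A; nra). assert (HB : 0 <= B) by (unfold B; nra).
  pose proof (sqrt_pos A). pose proof (sqrt_pos B).
  assert (Hc : p*r+q*s <= sqrt A * sqrt B).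
  { rewrite <- sqrt_mult_alt by lra. apply sqrt_sq_le.
    - apply Rmult_le_pos; lra.
    - unfold A, B. assert (0 <= (p*s-q*r)*(p*s-q*r)) by apply Rle_0_sqr. nra. }
  rewrite <- (sqrt_square (sqrt A + sqrt B)) by lra. apply sqrt_le_1_alt.
  assert (sqrt A * sqrt A = A) by (apply sqrt_sqrt; lra).
  assert (sqrt B * sqrt B = B) by (apply sqrt_sqrt; lra).
  unfold A, B in *. nra.
Qed.

Lemma Cmod_mul a b : Cmod (Cmul a b) = Cmod a * Cmod b.
Proof.
  unfold Cmod, Cmul; simpl. rewrite <- sqrt_mult_alt by nra. f_equal. ring.
Qed.

Lemma Cmod_real s : Cmod (mkC s 0) = Rabs s.
Proof. unfold Cmod; simpl. rewrite <- sqrt_Rsqr_abs. f_equal. unfold Rsqr; ring. Qed.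

Lemma Cmod_eq0 a : Cmod a = 0 -> a = C0.
Proof.
  unfold Cmod; intro H. apply sqrt_eq_0 in H; [|nra].
  apply Ceq; simpl; nra.
Qed.

Lemma Cmod_C0 : Cmod C0 = 0.
Proof. unfold Cmod; simpl. replace (0*0+0*0) with 0 by ring. apply sqrt_0. Qed.

Lemma Csub_C0 a : Csub a C0 = a.
Proof. apply Ceq; unfold Csub, Cadd, Copp; simpl; ring. Qed.

Lemma Re_le a : Rabs (Re a) <= Cmod a.
Proof.
  unfold Cmod. rewrite <- sqrt_Rsqr_abs. apply sqrt_le_1_alt. unfold Rsqr; nra.
Qed.
Lemma Im_le a : Rabs (Im a) <= Cmod a.
Proof.
  unfold Cmod. rewrite <- sqrt_Rsqr_abs. apply sqrt_le_1_alt. unfold Rsqr; nra.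
Qed.
Lemma Cmod_le_ReIm a : Cmod a <= Rabs (Re a) + Rabs (Im a).
Proof.
  unfold Cmod. rewrite <- (sqrt_square (Rabs (Re a) + Rabs (Im a))).
  apply sqrt_le_1_alt. pose proof (Rabs_pos (Re a)); pose proof (Rabs_pos (Im a)).
  pose proof (Rsqr_abs (Re a)); pose proof (Rsqr_abs (Im a)). unfold Rsqr in *. nra.
  pose proof (Rabs_pos (Re a)); pose proof (Rabs_pos (Im a)); lra.
Qed.

Definition Cinv (c : Cplx) : Cplx :=
  mkC (Re c / (Re c * Re c + Im c * Im c)) (- Im c / (Re c * Re c + Im c * Im c)).

Lemma Cmul_inv c : c <> C0 -> Cmul c (Cinv c) = Defs.C1.
Proof.
  intro H. destruct c as [p q].
  assert (p*p+q*q <> 0).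
  { intro E. apply H. apply Ceq; simpl; nra. }
  apply Ceq; unfold Cmul, Cinv; simpl; field; auto.
Qed.
Arguments vadd_assoc {_}. Arguments vadd_comm {_}. Arguments vadd_0 {_}.
Arguments vadd_opp {_}. Arguments vscal_1 {_}. Arguments vscal_assoc {_}.
Arguments vscal_distr_v {_}. Arguments vscal_distr_c {_}. Arguments vnorm_scal {_}.
Arguments vnorm_triangle {_}. Arguments vnorm_eq0 {_}.

Lemma vadd_0l {X : CBanach} (x : X) : vadd vzero x = x.
Proof. rewrite vadd_comm; apply vadd_0. Qed.

Lemma vadd_cancel {X : CBanach} (a b c : X) : vadd a b = vadd a c -> b = c.
Proof.
  intro H. rewrite <- (vadd_0l b), <- (vadd_0l c).
  rewrite <- (vadd_opp a), (vadd_comm a).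
  rewrite <- !vadd_assoc, H. reflexivity.
Qed.

Lemma vscal_C0 {X : CBanach} (x : X) : vscal C0 x = vzero.
Proof.
  apply (vadd_cancel (vscal C0 x)). rewrite vadd_0, <- vscal_distr_c.
  f_equal. apply Ceq; simpl; ring.
Qed.

Lemma vscal_0 {X : CBanach} a : vscal a (@vzero X) = vzero.
Proof.
  apply (vadd_cancel (vscal a vzero)). rewrite vadd_0, <- vscal_distr_v, vadd_0. reflexivity.
Qed.

Lemma vopp_unique {X : CBanach} (x y : X) : vadd x y = vzero -> y = vopp x.
Proof. intro H. apply (vadd_cancel x). rewrite H, vadd_opp; reflexivity. Qed.

Definition Cm1 : Cplx := mkC (-1) 0.

Lemma vopp_scal {X : CBanach} (x : X) : vopp x = vscal Cm1 x.
Proof.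
  symmetry. apply vopp_unique. rewrite <- (vscal_1 x) at 1.
  rewrite <- vscal_distr_c. rewrite <- (vscal_C0 x). f_equal. apply Ceq; simpl; ring.
Qed.

Lemma vnorm_opp {X : CBanach} (x : X) : vnorm (vopp x) = vnorm x.
Proof. rewrite vopp_scal, vnorm_scal; unfold Cm1; rewrite Cmod_real. replace (Rabs (-1)) with 1 by (rewrite Rabs_left; lra). ring. Qed.

Lemma vnorm_0 {X : CBanach} : vnorm (@vzero X) = 0.
Proof. rewrite <- (vscal_C0 vzero), vnorm_scal, Cmod_C0. ring. Qed.

Lemma vnorm_ge0 {X : CBanach} (x : X) : 0 <= vnorm x.
Proof.
  pose proof (vnorm_triangle x (vopp x)). rewrite vadd_opp, vnorm_0, vnorm_opp in H. lra.
Qed.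

Lemma vopp_add {X : CBanach} (x y : X) : vopp (vadd x y) = vadd (vopp x) (vopp y).
Proof. rewrite !vopp_scal. apply vscal_distr_v. Qed.

Lemma vadd_4 {X : CBanach} (a b c d : X) :
  vadd (vadd a b) (vadd c d) = vadd (vadd a c) (vadd b d).
Proof.
  rewrite <- !vadd_assoc. f_equal. rewrite !vadd_assoc. f_equal. apply vadd_comm.
Qed.

Lemma vscal_opp {X : CBanach} c (x : X) : vscal (Copp c) x = vopp (vscal c x).
Proof. rewrite vopp_scal, vscal_assoc. f_equal. apply Ceq; simpl; ring. Qed.

Lemma vscal_sub {X : CBanach} c d (x : X) :
  vscal (Csub c d) x = vadd (vscal c x) (vopp (vscal d x)).
Proof. unfold Csub. rewrite vscal_distr_c, vscal_opp. reflexivity. Qed.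

Lemma vadd_oppK {X : CBanach} (x y : X) : vadd (vadd x y) (vopp y) = x.
Proof. rewrite <- vadd_assoc, vadd_opp, vadd_0. reflexivity. Qed.

Lemma vsub_eq0 {X : CBanach} (x y : X) : vadd x (vopp y) = vzero -> x = y.
Proof.
  intro H. transitivity (vadd (vadd x (vopp y)) y).
  - rewrite <- vadd_assoc, (vadd_comm (vopp y)), vadd_opp, vadd_0; reflexivity.
  - rewrite H, vadd_0l; reflexivity.
Qed.

Lemma vopp_opp {X : CBanach} (x : X) : vopp (vopp x) = x.
Proof. symmetry. apply vopp_unique. rewrite vadd_comm. apply vadd_opp. Qed.

Lemma vnorm_sub_sym {X : CBanach} (x y : X) : vnorm (vadd x (vopp y)) = vnorm (vadd y (vopp x)).
Proof. rewrite <- vnorm_opp, vopp_add, vopp_opp, vadd_comm. reflexivity. Qed.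

Lemma cl_mono {X : CBanach} (Z Z' : X -> Prop) f lam :
  (forall x, Z x -> Z' x) -> cluster_set0 Z f lam -> cluster_set0 Z' f lam.
Proof.
  intros HZ (I & le & z & Hdir & Hz & Hw & Hl).
  exists I, le, z. split; [exact Hdir|]. split.
  - intro i; destruct (Hz i); split; auto.
  - split; [|exact Hl]. intros phi (Ha & Hs & M & HM). apply Hw.
    split; [|split]; auto. exists M; auto.
Qed.

Definition Wspan {X : CBanach} (Y : X -> Prop) (e : X) : X -> Prop :=
  fun x => exists c y, Y y /\ x = vadd y (vscal c e).

Lemma dec_ex {X : CBanach} (Y : X -> Prop) (e x : X) :
  exists p : Cplx * X, Wspan Y e x -> Y (snd p) /\ x = vadd (snd p) (vscal (fst p) e).
Proof.
  destruct (classic (Wspan Y e x)) as [(c & y & Hy & E)|N].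
  - exists (c, y); simpl; auto.
  - exists (C0, x); intro H; contradiction.
Qed.

Definition dec {X : CBanach} (Y : X -> Prop) (e x : X) : Cplx * X :=
  proj1_sig (constructive_indefinite_description _ (dec_ex Y e x)).

Lemma dec_spec {X : CBanach} (Y : X -> Prop) (e x : X) :
  Wspan Y e x -> Y (snd (dec Y e x)) /\ x = vadd (snd (dec Y e x)) (vscal (fst (dec Y e x)) e).
Proof. unfold dec. destruct (constructive_indefinite_description _ _); simpl; auto. Qed.

Lemma sub_opp {X : CBanach} (Y : X -> Prop) : is_subspace Y -> forall x, Y x -> Y (vopp x).
Proof. intros (H0 & Ha & Hs) x Hx. rewrite vopp_scal. auto. Qed.

Lemma uniq_dec {X : CBanach} (Y : X -> Prop) (e : X) d :
  is_subspace Y -> d > 0 ->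
  (forall y c, Y y -> Cmod c * d <= vnorm (vadd y (vscal c e))) ->
  forall y y' c c', Y y -> Y y' -> vadd y (vscal c e) = vadd y' (vscal c' e) ->
  c = c' /\ y = y'.
Proof.
  intros HY Hd HD y y' c c' Hy Hy' E.
  assert (E2 : vadd (vadd y (vopp y')) (vscal (Csub c c') e) = vzero).
  { rewrite vscal_sub, vadd_4, <- vopp_add, E. exact (vadd_opp _). }
  assert (Hyy : Y (vadd y (vopp y'))).
  { pose proof (sub_opp Y HY y' Hy'). destruct HY as (_ & Ha & _). apply Ha; auto. }
  pose proof (HD _ (Csub c c') Hyy) as Hb. rewrite E2, vnorm_0 in Hb.
  pose proof (Cmod_ge0 (Csub c c')).
  assert (Cmod (Csub c c') = 0) by nra.
  apply Cmod_eq0 in H0.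
  assert (c = c').
  { apply Ceq; assert (Re (Csub c c') = 0 /\ Im (Csub c c') = 0) by (rewrite H0; simpl; auto);
      unfold Csub, Cadd, Copp in *; simpl in *; lra. }
  subst c'. split; auto.
  rewrite (vadd_comm y), (vadd_comm y') in E. apply vadd_cancel in E. exact E.
Qed.

Lemma dec_eq {X : CBanach} (Y : X -> Prop) (e : X) d :
  is_subspace Y -> d > 0 ->
  (forall y c, Y y -> Cmod c * d <= vnorm (vadd y (vscal c e))) ->
  forall y c, Y y -> dec Y e (vadd y (vscal c e)) = (c, y).
Proof.
  intros HY Hd HD y c Hy.
  destruct (dec_spec Y e (vadd y (vscal c e))) as [H1 H2].
  { exists c, y; auto. }
  destruct (dec Y e (vadd y (vscal c e))) as [c' y']; simpl in *.
  destruct (uniq_dec Y e d HY Hd HD y y' c c' Hy H1 H2); subst; auto.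
Qed.

Lemma div_le a d n : d > 0 -> a * d <= n -> a <= / d * n.
Proof.
  intros Hd H. replace a with (/ d * (a * d)) by (field; lra).
  apply Rmult_le_compat_l; auto. left; apply Rinv_0_lt_compat; lra.
Qed.

Lemma psi_dual {X : CBanach} (Y : X -> Prop) (e : X) d :
  is_subspace Y -> d > 0 ->
  (forall y c, Y y -> Cmod c * d <= vnorm (vadd y (vscal c e))) ->
  dual_functional (Wspan Y e) (fun x => fst (dec Y e x)).
Proof.
  intros HY Hd HD. pose proof HY as (H0 & Ha & Hs).
  split; [|split].
  - intros x x' (c & y & Hy & ->) (c' & y' & Hy' & ->).
    rewrite vadd_4, <- vscal_distr_c.
    rewrite !(dec_eq Y e d HY Hd HD); auto.
  - intros a x (c & y & Hy & ->).
    rewrite vscal_distr_v, vscal_assoc.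
    rewrite !(dec_eq Y e d HY Hd HD); auto.
  - exists (/ d). intros x (c & y & Hy & ->).
    rewrite (dec_eq Y e d HY Hd HD); auto. simpl.
    pose proof (HD y c Hy).
    apply div_le; auto.
Qed.

Lemma Phi_dual {X : CBanach} (Y : X -> Prop) (e : X) d phi :
  is_subspace Y -> d > 0 ->
  (forall y c, Y y -> Cmod c * d <= vnorm (vadd y (vscal c e))) ->
  dual_functional Y phi ->
  dual_functional (Wspan Y e) (fun x => phi (snd (dec Y e x))).
Proof.
  intros HY Hd HD (Pa & Ps & M & HM). pose proof HY as (H0 & Ha & Hs).
  split; [|split].
  - intros x x' (c & y & Hy & ->) (c' & y' & Hy' & ->).
    rewrite vadd_4, <- vscal_distr_c.
    rewrite !(dec_eq Y e d HY Hd HD); auto. simpl; auto.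
  - intros a x (c & y & Hy & ->).
    rewrite vscal_distr_v, vscal_assoc.
    rewrite !(dec_eq Y e d HY Hd HD); auto. simpl; auto.
  - exists (Rmax M 0 * (1 + vnorm e / d)). intros x (c & y & Hy & ->).
    rewrite (dec_eq Y e d HY Hd HD); auto. simpl.
    pose proof (HD y c Hy). pose proof (HM y Hy).
    set (n := vnorm (vadd y (vscal c e))) in *.
    assert (Hyn : vnorm y <= n + Cmod c * vnorm e).
    { replace y with (vadd (vadd y (vscal c e)) (vopp (vscal c e))) at 1 by apply vadd_oppK.
      rewrite <- (vnorm_scal c e), <- (vnorm_opp (vscal c e)). apply vnorm_triangle. }
    assert (Hc : Cmod c <= n / d).
    { unfold Rdiv. rewrite Rmult_comm. apply div_le; auto. }
    pose proof (vnorm_ge0 e). pose proof (vnorm_ge0 y). pose proof (Cmod_ge0 c).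
    pose proof (Rmax_r M 0). pose proof (Rmax_l M 0).
    assert (Cmod c * vnorm e <= n * (vnorm e / d)).
    { unfold Rdiv in *. replace (n * (vnorm e * / d)) with ((n * / d) * vnorm e) by ring.
      apply Rmult_le_compat_r; auto. }
    assert (M * vnorm y <= Rmax M 0 * vnorm y) by (apply Rmult_le_compat_r; auto).
    assert (Rmax M 0 * vnorm y <= Rmax M 0 * (n + n * (vnorm e / d))).
    { apply Rmult_le_compat_l; auto. lra. }
    nra.
Qed.

Lemma Csub_split a b m : Csub a b = Cadd (Csub a m) (Csub m b).
Proof. apply Ceq; unfold Csub, Cadd, Copp; simpl; ring. Qed.

Lemma dir_up {I : Type} (le : I -> I -> Prop) : directed le ->
  forall i j, exists k, forall l, le k l -> le i l /\ le j l.
Proof.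
  intros (_ & _ & Ht & Hu) i j. destruct (Hu i j) as (k & Hik & Hjk).
  exists k; intros l Hl; split; eapply Ht; eauto.
Qed.

Lemma step {X : CBanach} (Y : X -> Prop) (e : X) d (f : X -> Cplx) :
  is_subspace Y -> d > 0 ->
  (forall y c, Y y -> Cmod c * d <= vnorm (vadd y (vscal c e))) ->
  unif_cont_on_ball f ->
  forall lam, cluster_set0 (Wspan Y e) f lam -> cluster_set0 Y f lam.
Proof.
  intros HY Hd HD Huc lam (I & le & z & Hdir & Hz & Hw & Hl).
  pose proof HY as (H0 & Ha & Hs).
  set (c := fun i => fst (dec Y e (z i))).
  set (y := fun i => snd (dec Y e (z i))).
  set (t := fun i => Cmod (c i) * vnorm e).
  set (s := fun i => / (1 + t i)).
  set (w := fun i => vscal (mkC (s i) 0) (y i)).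
  assert (Hdec : forall i, Y (y i) /\ z i = vadd (y i) (vscal (c i) e)).
  { intro i. apply dec_spec. apply Hz. }
  assert (Ht0 : forall i, 0 <= t i).
  { intro i. unfold t. pose proof (Cmod_ge0 (c i)); pose proof (vnorm_ge0 e). nra. }
  assert (Hs0 : forall i, 0 < s i /\ s i <= 1 /\ s i * (1 + t i) = 1).
  { intro i. specialize (Ht0 i). unfold s. split; [|split].
    - apply Rinv_0_lt_compat; lra.
    - rewrite <- Rinv_1. apply Rinv_le_contravar; lra.
    - field; lra. }
  assert (Hyn : forall i, vnorm (y i) <= vnorm (z i) + t i).
  { intro i. destruct (Hdec i) as [_ E].
    replace (y i) with (vadd (z i) (vopp (vscal (c i) e))).
    - unfold t. rewrite <- (vnorm_scal (c i) e), <- (vnorm_opp (vscal (c i) e)). apply vnorm_triangle.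
    - rewrite E. apply vadd_oppK. }
  assert (Hwz : forall i, vnorm (vsub (w i) (z i)) <= 2 * t i).
  { intro i. destruct (Hdec i) as [_ E].
    assert (Eq : vsub (w i) (z i) = vadd (vscal (mkC (s i - 1) 0) (y i)) (vopp (vscal (c i) e))).
    { unfold vsub, w. rewrite E, vopp_add, vadd_assoc. f_equal.
      rewrite vopp_scal, <- vscal_distr_c. f_equal. apply Ceq; unfold Cm1; simpl; ring. }
    rewrite Eq. eapply Rle_trans; [apply vnorm_triangle|].
    rewrite vnorm_opp, !vnorm_scal, Cmod_real. fold (t i) in *.
    destruct (Hs0 i) as (A & B & C'). rewrite Rabs_left1 by lra.
    pose proof (Hyn i). pose proof (Hz i) as [_ Hb]. unfold ball1 in Hb.
    pose proof (vnorm_ge0 (y i)). unfold t in *. nra. }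
  exists I, le, w. split; [exact Hdir|]. split; [|split].
  - intro i. split.
    + apply Hs. apply Hdec.
    + unfold ball1, w. rewrite vnorm_scal, Cmod_real.
      destruct (Hs0 i) as (A & B & C'). rewrite Rabs_pos_eq by lra.
      pose proof (Hyn i). pose proof (Hz i) as [_ Hb]. unfold ball1 in Hb.
      pose proof (vnorm_ge0 (y i)). nra.
  - intros phi Hphi.
    pose proof (Hw _ (Phi_dual Y e d phi HY Hd HD Hphi)) as Hc.
    intros eps Heps. destruct (Hc eps Heps) as (i0 & Hi0). exists i0. intros i Hi.
    specialize (Hi0 i Hi). simpl in Hi0. rewrite Csub_C0 in *.
    destruct Hphi as (_ & Ps & _). unfold w. rewrite Ps by apply Hdec.
    rewrite Cmod_mul, Cmod_real. destruct (Hs0 i) as (A & B & C').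
    rewrite Rabs_pos_eq by lra. fold (y i) in Hi0.
    pose proof (Cmod_ge0 (phi (y i))). nra.
  - intros eps Heps.
    destruct (Huc (eps / 2)) as (delta & Hdel & Hu); [lra|].
    pose proof (vnorm_ge0 e) as He.
    pose proof (Hw _ (psi_dual Y e d HY Hd HD)) as Hc.
    destruct (Hc (delta / (2 * (vnorm e + 1)))) as (i1 & Hi1).
    { apply Rdiv_lt_0_compat; lra. }
    destruct (Hl (eps / 2)) as (i2 & Hi2); [lra|].
    destruct (dir_up le Hdir i1 i2) as (k & Hk). exists k. intros i Hi.
    destruct (Hk i Hi) as [L1 L2].
    specialize (Hi1 i L1). specialize (Hi2 i L2). simpl in Hi1. rewrite Csub_C0 in Hi1.
    fold (c i) in Hi1.
    assert (Hd2 : vnorm (vsub (w i) (z i)) < delta).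
    { eapply Rle_lt_trans; [apply Hwz|]. unfold t.
      assert (Cmod (c i) * (2 * (vnorm e + 1)) < delta).
      { unfold Rdiv in Hi1. apply (Rmult_lt_compat_r (2 * (vnorm e + 1))) in Hi1; [|lra].
        rewrite Rmult_assoc, Rinv_l in Hi1 by lra. lra. }
      pose proof (Cmod_ge0 (c i)). nra. }
    assert (Hbw : ball1 (w i)).
    { unfold ball1, w. rewrite vnorm_scal, Cmod_real.
      destruct (Hs0 i) as (A & B & C'). rewrite Rabs_pos_eq by lra.
      pose proof (Hyn i). pose proof (Hz i) as [_ Hb]. unfold ball1 in Hb.
      pose proof (vnorm_ge0 (y i)). nra. }
    pose proof (Hu (w i) (z i) Hbw (proj2 (Hz i)) Hd2).
    rewrite (Csub_split _ _ (f (z i))). eapply Rle_lt_trans; [apply Cmod_triangle|]. lra.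
Qed.

Lemma dist_HD {X : CBanach} (Y : X -> Prop) (e : X) d :
  is_subspace Y -> d > 0 -> (forall y, Y y -> d <= vnorm (vadd e y)) ->
  forall y c, Y y -> Cmod c * d <= vnorm (vadd y (vscal c e)).
Proof.
  intros (H0 & Ha & Hs) Hd Hdist y c Hy.
  destruct (classic (c = C0)) as [->|Hc].
  - rewrite Cmod_C0, Rmult_0_l. apply vnorm_ge0.
  - assert (E : vadd y (vscal c e) = vscal c (vadd e (vscal (Cinv c) y))).
    { rewrite vscal_distr_v, vscal_assoc, Cmul_inv, vscal_1 by auto. apply vadd_comm. }
    rewrite E, vnorm_scal. apply Rmult_le_compat_l; [apply Cmod_ge0|]. auto.
Qed.

Lemma Wspan_sub {X : CBanach} (Y : X -> Prop) (e : X) :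
  is_subspace Y -> is_subspace (Wspan Y e).
Proof.
  intros (H0 & Ha & Hs). split; [|split].
  - exists C0, vzero. split; auto. rewrite vscal_C0, vadd_0. reflexivity.
  - intros x x' (c & y & Hy & ->) (c' & y' & Hy' & ->).
    exists (Cadd c c'), (vadd y y'). split; auto. rewrite vadd_4, vscal_distr_c. reflexivity.
  - intros a x (c & y & Hy & ->). exists (Cmul a c), (vscal a y). split; auto.
    rewrite vscal_distr_v, vscal_assoc. reflexivity.
Qed.

Lemma vsub_chain {X : CBanach} (a b c : X) :
  vadd (vadd a (vopp b)) (vadd b (vopp c)) = vadd a (vopp c).
Proof.
  rewrite <- vadd_assoc. f_equal. rewrite vadd_assoc, (vadd_comm (vopp b)), vadd_opp, vadd_0l.
  reflexivity.
Qed.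

Lemma Wspan_closed {X : CBanach} (Y : X -> Prop) (e : X) d :
  is_subspace Y -> is_closed Y -> d > 0 ->
  (forall y c, Y y -> Cmod c * d <= vnorm (vadd y (vscal c e))) ->
  is_closed (Wspan Y e).
Proof.
  intros HY HYc Hd HD u l Hu Hl.
  set (c := fun n => fst (dec Y e (u n))).
  set (y := fun n => snd (dec Y e (u n))).
  assert (Hdec : forall n, Y (y n) /\ u n = vadd (y n) (vscal (c n) e)).
  { intro n. apply dec_spec. apply Hu. }
  assert (Hcc : forall n m, Cmod (Csub (c n) (c m)) * d <= vnorm (vsub (u n) l) + vnorm (vsub (u m) l)).
  { intros n m. destruct (Hdec n) as [Hn En]. destruct (Hdec m) as [Hm Em].
    assert (Y (vadd (y n) (vopp (y m)))).
    { pose proof (sub_opp Y HY (y m) Hm). destruct HY as (_ & Ha & _). apply Ha; auto. }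
    eapply Rle_trans; [apply HD; eauto|].
    rewrite vscal_sub, vadd_4, <- vopp_add, <- En, <- Em.
    rewrite <- (vsub_chain (u n) l (u m)). eapply Rle_trans; [apply vnorm_triangle|].
    unfold vsub. rewrite (vnorm_sub_sym l). lra. }
  assert (Hcauchy : forall eps, eps > 0 -> exists N, forall n m, (n >= N)%nat -> (m >= N)%nat ->
            Cmod (Csub (c n) (c m)) < eps).
  { intros eps He. destruct (Hl (eps * d / 2)) as (N & HN).
    { apply Rdiv_lt_0_compat; [apply Rmult_lt_0_compat|]; lra. }
    exists N. intros n m Hn Hm. pose proof (Hcc n m). pose proof (HN n Hn). pose proof (HN m Hm).
    apply (Rmult_lt_reg_r d); [lra|]. lra. }
  assert (HRe : Cauchy_crit (fun n => Re (c n))).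
  { intros eps He. destruct (Hcauchy eps He) as (N & HN). exists N. intros n m Hn Hm.
    unfold R_dist. eapply Rle_lt_trans; [|apply (HN n m Hn Hm)].
    eapply Rle_trans; [|apply Re_le]. unfold Csub, Cadd, Copp; simpl. unfold Rminus; apply Rle_refl. }
  assert (HIm : Cauchy_crit (fun n => Im (c n))).
  { intros eps He. destruct (Hcauchy eps He) as (N & HN). exists N. intros n m Hn Hm.
    unfold R_dist. eapply Rle_lt_trans; [|apply (HN n m Hn Hm)].
    eapply Rle_trans; [|apply Im_le]. unfold Csub, Cadd, Copp; simpl. unfold Rminus; apply Rle_refl. }
  destruct (R_complete _ HRe) as (lr & Hlr). destruct (R_complete _ HIm) as (li & Hli).
  set (c0 := mkC lr li).
  assert (Hcl : Y (vadd l (vopp (vscal c0 e)))).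
  { apply (HYc y). { intro n; apply Hdec. }
    intros eps He. pose proof (vnorm_ge0 e) as Hen.
    set (eta := eps / (2 * (2 * (vnorm e + 1)))).
    assert (Heta : eta > 0) by (unfold eta; apply Rdiv_lt_0_compat; lra).
    destruct (Hl (eps / 2)) as (N1 & HN1); [lra|].
    destruct (Hlr eta Heta) as (N2 & HN2). destruct (Hli eta Heta) as (N3 & HN3).
    exists (N1 + N2 + N3)%nat. intros n Hn.
    specialize (HN1 n ltac:(lia)). specialize (HN2 n ltac:(lia)). specialize (HN3 n ltac:(lia)).
    unfold R_dist in HN2, HN3.
    destruct (Hdec n) as [_ En].
    assert (Eq : vsub (y n) (vadd l (vopp (vscal c0 e))) =
                 vadd (vsub (u n) l) (vscal (Csub c0 (c n)) e)).
    { unfold vsub. rewrite En, vopp_add, vopp_opp, vscal_sub.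
      set (A := vscal (c n) e). set (B := vscal c0 e).
      rewrite <- !vadd_assoc. f_equal.
      rewrite (vadd_comm A), <- !vadd_assoc, (vadd_comm (vopp A) A), vadd_opp, vadd_0.
      reflexivity. }
    rewrite Eq. eapply Rle_lt_trans; [apply vnorm_triangle|]. rewrite vnorm_scal.
    assert (Cmod (Csub c0 (c n)) <= 2 * eta).
    { eapply Rle_trans; [apply Cmod_le_ReIm|]. unfold Csub, Cadd, Copp, c0; simpl.
      rewrite <- (Rabs_Ropp (lr + - Re (c n))), <- (Rabs_Ropp (li + - Im (c n))).
      replace (- (lr + - Re (c n))) with (Re (c n) - lr) by ring.
      replace (- (li + - Im (c n))) with (Im (c n) - li) by ring. lra. }
    assert (2 * eta * vnorm e <= eps / 2).
    { replace (2 * eta * vnorm e) with (eps / 2 * (vnorm e / (vnorm e + 1)))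
        by (unfold eta; field; lra).
      assert (Hq : vnorm e / (vnorm e + 1) <= 1).
      { apply (Rmult_le_reg_r (vnorm e + 1)); [lra|]. unfold Rdiv.
        rewrite Rmult_assoc, Rinv_l by lra. lra. }
      assert (0 <= vnorm e / (vnorm e + 1)).
      { unfold Rdiv. apply Rmult_le_pos; [lra|]. left; apply Rinv_0_lt_compat; lra. }
      nra. }
    pose proof (Cmod_ge0 (Csub c0 (c n))). nra. }
  exists c0, (vadd l (vopp (vscal c0 e))). split; auto.
  rewrite <- vadd_assoc, (vadd_comm (vopp _)), vadd_opp, vadd_0. reflexivity.
Qed.

Lemma dichotomy {X : CBanach} (Y : X -> Prop) (e : X) :
  is_subspace Y -> is_closed Y ->
  Y e \/ exists d, d > 0 /\ forall y, Y y -> d <= vnorm (vadd e y).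
Proof.
  intros HY HYc.
  destruct (classic (exists d, d > 0 /\ forall y, Y y -> d <= vnorm (vadd e y))) as [H|H]; [right; auto|left].
  assert (Hex : forall n : nat, exists y, Y y /\ vnorm (vadd e y) < / (INR n + 1)).
  { intro n. apply NNPP. intro Hn. apply H. exists (/ (INR n + 1)). split.
    - apply Rinv_0_lt_compat. pose proof (pos_INR n); lra.
    - intros y Hy. apply Rnot_lt_le. intro Hl. apply Hn. exists y; auto. }
  set (ys := fun n => proj1_sig (constructive_indefinite_description _ (Hex n))).
  assert (Hys : forall n, Y (ys n) /\ vnorm (vadd e (ys n)) < / (INR n + 1)).
  { intro n. unfold ys. destruct (constructive_indefinite_description _ _); simpl; auto. }
  apply (HYc (fun n => vopp (ys n))).
  - intro n. apply sub_opp; auto. apply Hys.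
  - intros eps He. destruct (archimed_cor1 eps He) as (N & HN & HN0). exists N. intros n Hn.
    unfold vsub. rewrite <- vopp_add, vnorm_opp, vadd_comm.
    destruct (Hys n) as [_ Hb]. eapply Rlt_le_trans; [apply Hb|].
    eapply Rle_trans; [|left; apply HN].
    apply Rinv_le_contravar.
    + apply lt_0_INR. lia.
    + apply le_INR in Hn. lra.
Qed.

Lemma main_ind {X : CBanach} (e : nat -> X) (f : X -> Cplx) :
  unif_cont_on_ball f ->
  forall n (Y : X -> Prop), is_subspace Y -> is_closed Y ->
  (forall x, exists c y, Y y /\ x = vadd y (lincomb n c e)) ->
  forall lam, cluster_set0 (fun _ => True) f lam -> cluster_set0 Y f lam.
Proof.
  intros Huc n. induction n as [|n IH]; intros Y HY HYc Hrep lam Hcl.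
  - apply (cl_mono (fun _ => True) Y f lam); auto. intros x _.
    destruct (Hrep x) as (c & y & Hy & E). simpl in E. rewrite vadd_0 in E. subst; auto.
  - pose proof HY as (H0 & Ha & Hs).
    destruct (dichotomy Y (e n) HY HYc) as [Hin | (d & Hd & Hdist)].
    + apply IH; auto. intro x. destruct (Hrep x) as (c & y & Hy & E).
      exists c, (vadd y (vscal (c n) (e n))). split; auto.
      rewrite E. simpl. rewrite <- !vadd_assoc, (vadd_comm (lincomb n c e)). reflexivity.
    + pose proof (dist_HD Y (e n) d HY Hd Hdist) as HD.
      apply (step Y (e n) d f HY Hd HD Huc).
      apply IH; auto.
      * apply Wspan_sub; auto.
      * apply (Wspan_closed Y (e n) d); auto.
      * intro x. destruct (Hrep x) as (c & y & Hy & E).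
        exists c, (vadd y (vscal (c n) (e n))). split.
        -- exists (c n), y; auto.
        -- rewrite E. simpl. rewrite <- !vadd_assoc, (vadd_comm (lincomb n c e)). reflexivity.
Qed.

Theorem proposition2p5 (X : CBanach) (Y : X -> Prop)
  (HYsub : is_subspace Y) (HYclosed : is_closed Y) (HYcodim : finite_codim Y)
  (f : X -> Cplx) (Hf : A_u f) :
  forall lam : Cplx,
    cluster_set0 (fun _ : X => True) f lam <-> cluster_set0 Y f lam.
Proof.
  intro lam. destruct Hf as (_ & _ & Huc). destruct HYcodim as (n & e & Hrep). split.
  - apply (main_ind e f Huc n Y HYsub HYclosed Hrep).
  - apply cl_mono. auto.
Qed.
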